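(* Let $V=\{(a_1,a_2,\ldots)\mid a_i\in\mathbb{C},\ \sum_i|a_i|^2<\infty\}$ with quadratic form $f((a_i))=\sum_i a_i^2$ and associated bilinear form $f(u,v)=f(u+v)-f(u)-f(v)$, and let $Cl(V,f)$ be its Clifford algebra. For $v\in V$ let $v^{\perp}=\{v'\in V\mid f(v,v')=0\}$ and let $C(v)=\{a\in Cl(V,f)\mid va=av\}$. (A) If $v\in V$ and $f(v)=1$, then $C(v)=v\,Cl(v^{\perp},f)_{\bar0}+Cl(v^{\perp},f)_{\bar0}$. (B) Let $n$ be odd and, for $1\le i\le n$, let $v_i\in V$ be the sequence with $1$ in position $i$ and $0$ elsewhere. Then $$C(v_1)\cap\cdots\cap C(v_n)=v_1v_2\cdots v_n\,Cl(v_1^{\perp}\cap\cdots\cap v_n^{\perp},f)_{\bar0}+Cl(v_1^{\perp}\cap\cdots\cap v_n^{\perp},f)_{\bar0}.$$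
   Context: The Clifford algebra $Cl(V,f)$ is the unital associative $\mathbb{C}$-algebra generated by $V$ and $1$ subject to $v^2=f(v)\cdot1$ for $v\in V$. For a subspace $U\subseteq V$, $Cl(U,f)$ denotes the subalgebra generated by $1$ and $U$. $Cl(U,f)$ carries the natural $\mathbb{Z}/2\mathbb{Z}$-grading $Cl(U,f)=Cl(U,f)_{\bar0}+Cl(U,f)_{\bar1}$, where $Cl(U,f)_{\bar0}$ is spanned by all products of an even number of elements of $U$ (including the empty product $1$) and $Cl(U,f)_{\bar1}$ by all products of an odd number of elements of $U$. *)

(* Defs.v *)
From HB Require Import structures.
From mathcomp Require Import all_boot all_order all_algebra.
From mathcomp Require Import all_classical all_reals.
From mathcomp Require Import topology normedtype sequences.
From mathcomp Require Import complex.
From Stdlib Require List.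
Set Implicit Arguments. Unset Strict Implicit. Unset Printing Implicit Defensive.
Import Order.TTheory GRing.Theory Num.Theory numFieldNormedType.Exports.
Local Open Scope ring_scope.
Local Open Scope classical_set_scope.

(* Complex numbers are modelled as R[i] over an arbitrary realType R
   (every realType is isomorphic to the reals). *)

Section Hilbert.
Variable R : realType.
Local Notation C := (complex R).

(* complex sequences (a_1, a_2, ...) ; index 0 plays the role of position 1 *)
Definition cseq := nat -> C.

Definition sqnorm (z : C) : R := complex.Re z ^+ 2 + complex.Im z ^+ 2.

Definition inV (a : cseq) : Prop := cvgn (series (fun k => sqnorm (a k))).

Definition sadd (a b : cseq) : cseq := fun k => a k + b k.
Definition sscale (c : C) (a : cseq) : cseq := fun k => c * a k.

(* quadratic form f((a_i)) = sum_i a_i^2 (a convergent complex series for a in V;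
   its real and imaginary parts are absolutely convergent real series) *)
Definition qf (a : cseq) : C :=
  Complex (limn (series (fun k => complex.Re (a k ^+ 2))))
          (limn (series (fun k => complex.Im (a k ^+ 2)))).

Definition bf (u v : cseq) : C := qf (sadd u v) - qf u - qf v.

Definition perp (v : cseq) : cseq -> Prop := fun w => inV w /\ bf v w = 0.

Definition unitv (i : nat) : cseq := fun k => if k.+1 == i then 1 else 0.

(* Cl(V,f) given by its presentation: a unital associative C-algebra A with a
   map iota : V -> A, linear on V, with iota(v)^2 = f(v) 1, which is universal
   (initial) among such data. *)
Definition alg_morph (A B : algType C) (h : A -> B) : Prop :=
  [/\ forall x y, h (x + y) = h x + h y,
      forall x y, h (x * y) = h x * h y,
      h 1 = 1 &
      forall (c : C) x, h (c *: x) = c *: h x].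

Definition clifford_data (B : algType C) (g : cseq -> B) : Prop :=
  (forall (c : C) u v, inV u -> inV v -> g (sadd (sscale c u) v) = c *: g u + g v)
  /\ (forall v, inV v -> g v * g v = (qf v)%:A).

Definition is_clifford (A : algType C) (iota : cseq -> A) : Prop :=
  clifford_data iota /\
  forall (B : algType C) (g : cseq -> B), clifford_data g ->
    (exists h : A -> B, alg_morph h /\ forall v, inV v -> h (iota v) = g v) /\
    (forall h1 h2 : A -> B, alg_morph h1 -> alg_morph h2 ->
       (forall v, inV v -> h1 (iota v) = g v) ->
       (forall v, inV v -> h2 (iota v) = g v) -> h1 =1 h2).

Definition cl_even (A : algType C) (iota : cseq -> A) (U : cseq -> Prop)
    (a : A) : Prop :=
  exists (k : nat) (c : 'I_k -> C) (w : 'I_k -> seq cseq),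
    (forall i, List.Forall U (w i) /\ ~~ odd (size (w i))) /\
    a = \sum_(i < k) c i *: \prod_(x <- w i) iota x.

Definition centr (A : algType C) (iota : cseq -> A) (v : cseq) (a : A) : Prop :=
  iota v * a = a * iota v.

End Hilbert.

(* Main.v *)
Require Import Defs.
From HB Require Import structures.
From mathcomp Require Import all_boot all_order all_algebra.
From mathcomp Require Import all_classical all_reals.
From mathcomp Require Import topology normedtype sequences.
From mathcomp Require Import complex.
From mathcomp Require Import ring lra.
Import Order.TTheory GRing.Theory Num.Theory.
Local Open Scope ring_scope.

Module Aux.
Import numFieldNormedType.Exports.
Set Implicit Arguments. Unset Strict Implicit. Unset Printing Implicit Defensive.

Section Analytic.
Variable R : realType.
Local Open Scope classical_set_scope.

Lemma sqnorm_ge0 (z : complex R) : 0 <= sqnorm z.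
Proof. by rewrite /sqnorm addr_ge0 // sqr_ge0. Qed.

Lemma sqnorm_lin (c a b : complex R) :
  sqnorm (c * a + b) <= 2 * (sqnorm c * sqnorm a) + 2 * sqnorm b.
Proof.
case: c => cr ci; case: a => ar ai; case: b => br bi.
rewrite /sqnorm /=.
rewrite -subr_ge0.
match goal with |- is_true (0 <= ?E) => have -> : E = (cr * ar - ci * ai - br) ^+ 2 + (cr * ai + ci * ar - bi) ^+ 2 by ring end.
by rewrite addr_ge0 // sqr_ge0.
Qed.

Lemma inV_lin (c : complex R) (u v : cseq R) :
  inV u -> inV v -> inV (sadd (sscale c u) v).
Proof.
rewrite /inV => hu hv.
apply: (@series_le_cvg R _ (fun k => (2 * sqnorm c) * sqnorm (u k) + 2 * sqnorm (v k))).
- by move=> n; exact: sqnorm_ge0.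
- move=> n; apply: addr_ge0; apply: mulr_ge0 => //; rewrite ?mulr_ge0 //; exact: sqnorm_ge0.
- by move=> n; rewrite /sadd /sscale -mulrA; exact: sqnorm_lin.
have -> : (fun k => 2 * sqnorm c * sqnorm (u k) + 2 * sqnorm (v k)) =
   ((2 * sqnorm c) *: ((fun k => sqnorm (u k)) : (R^o) ^nat)) + (2 *: ((fun k => sqnorm (v k)) : (R^o) ^nat)).
  by apply/funext => k.
apply: is_cvg_seriesD; exact: is_cvg_seriesZ.
Qed.

Definition ind (i k : nat) : R := if k == i then 1 else 0.

Lemma series_ind i n : series (ind i) n = if (i < n)%N then 1 else 0.
Proof.
elim: n => [|n IH]; first by rewrite /series /= big_geq.
rewrite /series /= big_nat_recr //=.
move: IH; rewrite /series /= => ->; rewrite /ind.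
case: (ltngtP i n) => [h|h|->].
- by rewrite ltnS ltnW // addr0.
- by rewrite ltnS leqNgt h /= addr0.
- by rewrite ltnSn add0r.
Qed.

Lemma near_series_ind i : \forall n \near \oo, series (ind i) n = 1.
Proof.
near=> n; rewrite series_ind.
have -> : (i < n)%N by near: n; exists i.+1 => // m; rewrite /= ltnS.
by [].
Unshelve. all: by end_near. Qed.

Lemma cvg_series_ind i : cvgn (series (ind i)).
Proof. apply/cvg_ex; exists (1:R); apply: cvg_near_cst; exact (near_series_ind i). Qed.

Lemma lim_series_ind i : limn (series (ind i)) = 1.
Proof. apply: lim_near_cst; [exact: Rhausdorff | exact (near_series_ind i)]. Qed.


Lemma series0 : series (fun _ : nat => (0:R)) = fun _ => 0.
Proof. by apply/funext => n; rewrite /series /= big1. Qed.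

Lemma lim_series0 : limn (series (fun _ : nat => (0:R))) = 0.
Proof. by rewrite series0; apply: lim_cst; exact: Rhausdorff. Qed.

Lemma unitvE j k : unitv R j.+1 k = if k == j then 1 else 0.
Proof. by []. Qed.

Lemma inV_unitv j : inV (unitv R j.+1).
Proof.
rewrite /inV.
have -> : (fun k => sqnorm (unitv R j.+1 k)) = ind j.
  apply/funext => k; rewrite unitvE /ind /sqnorm; case: (k == j) => /=.
  - by rewrite expr1n expr0n addr0.
  - by rewrite expr0n addr0.
exact: cvg_series_ind.
Qed.

Lemma qf_unitv j : qf (unitv R j.+1) = 1.
Proof.
rewrite /qf.
have -> : (fun k => complex.Re (unitv R j.+1 k ^+ 2)) = ind j.
  apply/funext => k; rewrite unitvE /ind; case: (k == j).
  - by rewrite expr1n.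
  - by rewrite expr0n.
have -> : (fun k => complex.Im (unitv R j.+1 k ^+ 2)) = (fun=> 0).
  apply/funext => k; rewrite unitvE; case: (k == j).
  - by rewrite expr1n.
  - by rewrite expr0n.
by rewrite lim_series_ind lim_series0.
Qed.

Lemma bf_unitv i j : i != j -> bf (unitv R i.+1) (unitv R j.+1) = 0.
Proof.
move=> nij; rewrite /bf !qf_unitv.
suff -> : qf (sadd (unitv R i.+1) (unitv R j.+1)) = 1 + 1 by rewrite addrK subrr.
rewrite /qf.
have -> : (fun k => complex.Re (sadd (unitv R i.+1) (unitv R j.+1) k ^+ 2)) = ind i + ind j.
  apply/funext => k; change (complex.Re (sadd (unitv R i.+1) (unitv R j.+1) k ^+ 2) = ind i k + ind j k).
  rewrite /sadd !unitvE /ind.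
  case: (eqVneq k i) => [->|ki]; first by rewrite (negbTE nij) !addr0 expr1n.
  case: (k == j); by rewrite ?add0r ?addr0 ?expr1n ?expr0n.
have -> : (fun k => complex.Im (sadd (unitv R i.+1) (unitv R j.+1) k ^+ 2)) = (fun=> 0).
  apply/funext => k; rewrite /sadd !unitvE.
  case: (eqVneq k i) => [->|ki]; first by rewrite (negbTE nij) !addr0 expr1n.
  case: (k == j); by rewrite ?add0r ?addr0 ?expr1n ?expr0n.
rewrite lim_seriesD ?lim_series_ind ?lim_series0;
  try (exact (cvg_series_ind i)); try (exact (cvg_series_ind j)).
- by apply/eqP; rewrite eq_complex /= addr0 !eqxx.
- apply: cvg_near_cst; exact (near_series_ind i).
- apply: cvg_near_cst; exact (near_series_ind j).
Qed.

End Analytic.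


Definition sgc (R : realType) (b : bool) : complex R := if b then -1 else 1.

Lemma two_neq0 (R : realType) : (1 + 1 : complex R) != 0.
Proof. by rewrite eq_complex /= addr0 eqxx andbT -mulr2n pnatr_eq0. Qed.

Section Core.
Variable R : realType.
Local Notation C := (complex R).
Local Notation sg := (@sgc R).
Variable A : algType C.
Variable iota : cseq R -> A.
Hypothesis hlin : forall (c : C) u v, inV u -> inV v ->
  iota (sadd (sscale c u) v) = c *: iota u + iota v.
Hypothesis hsq : forall v, inV v -> iota v * iota v = (qf v)%:A.
Implicit Types (u w ee : cseq R).

Lemma scalA_inj (c d : C) : c%:A = d%:A :> A -> c = d.
Proof.
move=> h; apply/eqP; rewrite -subr_eq0.
have : (c - d) *: (1:A) == 0 by rewrite scalerBl h subrr.
by rewrite scaler_eq0 oner_eq0 orbF.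
Qed.

Lemma two_scale_inj (x y : A) : x + x = y + y -> x = y.
Proof.
move=> h; apply/eqP; rewrite -subr_eq0.
have : (1 + 1 : C) *: (x - y) == 0.
  by rewrite scalerDl scale1r addrACA -opprD h subrr.
by rewrite scaler_eq0 (negbTE (two_neq0 R)).
Qed.

Lemma sscale1 (u : cseq R) : sscale 1 u = u.
Proof. by apply/funext => k; rewrite /sscale mul1r. Qed.

Lemma inVD u w : inV u -> inV w -> inV (sadd u w).
Proof. by move=> hu hw; rewrite -[u]sscale1; exact: inV_lin. Qed.

Lemma iotaD u w : inV u -> inV w -> iota (sadd u w) = iota u + iota w.
Proof. by move=> hu hw; rewrite -[u in sadd u]sscale1 hlin // scale1r. Qed.

Lemma zs1 (V : zmodType) (X Y : V) : X + Y + (X - Y) = X + X.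
Proof. by rewrite addrACA subrr addr0. Qed.
Lemma zs2 (V : zmodType) (X Y : V) : X + Y - (X - Y) = Y + Y.
Proof. by rewrite opprB addrA addrAC [X + Y]addrC addrK. Qed.

Lemma zmod_shuf (V : zmodType) (a b X Y : V) :
  a + X + (Y + b) - a - b = X + Y.
Proof. by rewrite -addrA -opprD [Y + b]addrC addrACA addrAC subrr add0r. Qed.

Lemma anti u w : inV u -> inV w ->
  iota u * iota w + iota w * iota u = (bf u w)%:A.
Proof.
move=> hu hw; have := hsq (inVD hu hw).
rewrite iotaD // mulrDl !mulrDr !hsq // => h.
by rewrite /bf !scalerBl -h zmod_shuf.
Qed.

Lemma anti0 u w : inV u -> inV w -> bf u w = 0 ->
  iota u * iota w = - (iota w * iota u).
Proof. by move=> hu hw h0; apply/eqP; rewrite -addr_eq0 anti // h0 scale0r. Qed.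

Lemma bf_lin ee (c : C) u w : inV ee -> inV u -> inV w ->
  bf ee (sadd (sscale c u) w) = c * bf ee u + bf ee w.
Proof.
move=> he hu hw; apply: scalA_inj.
rewrite -anti //; last exact: inV_lin.
rewrite hlin // scalerDl -scalerA -!anti // mulrDr mulrDl -scalerAr -scalerAl.
by rewrite scalerDr addrACA.
Qed.

Lemma bf_sym u w : bf u w = bf w u.
Proof.
rewrite /bf; have -> : sadd u w = sadd w u by apply/funext => k; rewrite /sadd addrC.
by rewrite addrAC.
Qed.

Lemma bf_self ee : inV ee -> qf ee = 1 -> bf ee ee = 1 + 1.
Proof. by move=> he hq; apply: scalA_inj; rewrite -anti // hsq // hq scalerDl. Qed.

Lemma sq1 ee : inV ee -> qf ee = 1 -> iota ee * iota ee = 1.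
Proof. by move=> he hq; rewrite hsq // hq scale1r. Qed.

Inductive clp (U : cseq R -> Prop) : bool -> A -> Prop :=
| clp1 : clp U false 1
| clp0 p : clp U p 0
| clpD p x y : clp U p x -> clp U p y -> clp U p (x + y)
| clpZ p (c : C) x : clp U p x -> clp U p (c *: x)
| clpM p u x : U u -> clp U p x -> clp U (~~ p) (iota u * x).

Lemma clpN U p x : clp U p x -> clp U p (- x).
Proof. by move=> h; rewrite -scaleN1r; exact: clpZ. Qed.

Lemma clpB U p x y : clp U p x -> clp U p y -> clp U p (x - y).
Proof. by move=> hx hy; apply: clpD => //; exact: clpN. Qed.

Lemma clp_mono (U U' : cseq R -> Prop) p x :
  (forall w, U w -> U' w) -> clp U p x -> clp U' p x.
Proof.
move=> hUU; elim => {p x}.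
- exact: clp1.
- exact: clp0.
- by move=> p x y _ hx _ hy; exact: clpD.
- by move=> p c x _ hx; exact: clpZ.
- by move=> p u x hu _ hx; apply: clpM => //; exact: hUU.
Qed.

Lemma clp_mul U p q x y : clp U p x -> clp U q y -> clp U (p (+) q) (x * y).
Proof.
move=> hx hy; elim: hx => {x p}.
- by rewrite mul1r.
- by move=> p; rewrite mul0r; exact: clp0.
- by move=> p x1 x2 _ h1 _ h2; rewrite mulrDl; exact: clpD.
- by move=> p c x _ h; rewrite -scalerAl; exact: clpZ.
- move=> p u x hu _ h; rewrite -mulrA.
  have -> : ~~ p (+) q = ~~ (p (+) q) by move: (p) (q) => [] [].
  exact: clpM.
Qed.

Lemma clp_anti U ee p x :
  (forall w, U w -> iota ee * iota w = - (iota w * iota ee)) ->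
  clp U p x -> iota ee * x = sg p *: (x * iota ee).
Proof.
move=> hU; elim => {p x}.
- by rewrite mulr1 mul1r scale1r.
- by move=> p; rewrite mulr0 mul0r scaler0.
- by move=> p x y _ hx _ hy; rewrite mulrDr mulrDl scalerDr hx hy.
- move=> p c x _ hx.
  have -> : iota ee * (c *: x) = c *: (iota ee * x) by rewrite scalerAr.
  have -> : (c *: x) * iota ee = c *: (x * iota ee) by rewrite scalerAl.
  transitivity (c *: (sg p *: (x * iota ee))); first exact: (congr1 (fun z => c *: z) hx).
  by rewrite !scalerA mulrC.
- move=> p u x hu _ hx.
  have -> : iota ee * (iota u * x) = - (iota u * (iota ee * x)) by rewrite mulrA hU // mulNr mulrA.
  transitivity (- (iota u * (sg p *: (x * iota ee)))); first by rewrite hx.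
  rewrite -scalerAr mulrA -scaleNr; congr (_ *: _); by case: (p); rewrite /sgc ?opprK.
Qed.

Lemma clp_gamma (h : A -> A) U p x :
  alg_morph h -> (forall u, U u -> h (iota u) = - iota u) ->
  clp U p x -> h x = sg p *: x.
Proof.
case=> hD hM h1 hZ hU; elim => {p x}.
- by rewrite h1 scale1r.
- move=> p; rewrite scaler0; have := hD 0 0; rewrite addr0.
  by move=> /(congr1 (fun z => z - h 0)); rewrite subrr addrK => /esym.
- by move=> p x y _ hx _ hy; rewrite hD hx hy scalerDr.
- by move=> p c x _ hx; rewrite hZ hx !scalerA mulrC.
- move=> p u x hu _ hx; rewrite hM hU // hx mulNr -scalerAr -scaleNr.
  by congr (_ *: _); case: (p); rewrite /sgc ?opprK.
Qed.


Lemma decomp_eq (E Uu X Y : A) (al : C) : E * E = 1 -> Uu * E = - (E * Uu) ->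
  (al *: E + Uu) * (X + E * Y) = (al *: Y + Uu * X) + E * (al *: X - Uu * Y).
Proof.
move=> hEE hUE.
have h1 : (al *: E) * X = al *: (E * X) by rewrite scalerAl.
have h2 : (al *: E) * (E * Y) = al *: Y by rewrite -scalerAl mulrA hEE mul1r.
have h3 : Uu * (E * Y) = - (E * (Uu * Y)) by rewrite mulrA hUE mulNr mulrA.
have h4 : E * (al *: X - Uu * Y) = al *: (E * X) - E * (Uu * Y) by rewrite mulrBr scalerAr.
rewrite h4 mulrDl !mulrDr h1 h2 h3.
by rewrite [RHS]addrACA [al *: (E * X) + _]addrC.
Qed.

Lemma decomp (U : cseq R -> Prop) ee p a :
  (forall c u w, U u -> U w -> U (sadd (sscale c u) w)) ->
  (forall u, U u -> inV u) -> U ee -> qf ee = 1 ->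
  clp U p a ->
  exists x y : A, clp (fun w => U w /\ bf ee w = 0) p x /\
              clp (fun w => U w /\ bf ee w = 0) (~~ p) y /\
              a = x + iota ee * y.
Proof.
move=> Ucl UV Ue qe; have Ve := UV _ Ue.
elim => {p a}.
- exists 1, 0; split; first exact: clp1.
  split; first exact: clp0. by rewrite mulr0 addr0.
- move=> p; exists 0, 0; split; first exact: clp0.
  split; first exact: clp0. by rewrite mulr0 addr0.
- move=> p a1 a2 _ [x1 [y1 [h1 [h1' ->]]]] _ [x2 [y2 [h2 [h2' ->]]]].
  exists (x1 + x2), (y1 + y2); split; first exact: clpD.
  split; first exact: clpD. by rewrite mulrDr addrACA.
- move=> p c a0 _ [x [y [hx [hy ->]]]].
  exists (c *: x), (c *: y); split; first exact: clpZ.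
  split; first exact: clpZ. by rewrite scalerDr scalerAr.
- move=> p u a0 hu _ [x0 [y0 [hx [hy ->]]]].
  have Vu := UV _ hu.
  set al : C := bf ee u / (1 + 1).
  set u' := sadd (sscale (- al) ee) u.
  have Vu' : inV u' by exact: inV_lin.
  have bu' : bf ee u' = 0.
    by rewrite /u' bf_lin // bf_self // /al mulNr divfK ?two_neq0 // addNr.
  have hu' : U u' /\ bf ee u' = 0 by split => //; exact: Ucl.
  have iu : iota u = al *: iota ee + iota u'.
    by rewrite /u' hlin // addrA scaleNr subrr add0r.
  have hEE := sq1 Ve qe.
  have hUE : iota u' * iota ee = - (iota ee * iota u') by rewrite anti0 // bf_sym.
  exists (al *: y0 + iota u' * x0), (al *: x0 - iota u' * y0).
  split; first by apply: clpD; [exact: clpZ | exact: clpM].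
  split.
    rewrite negbK; apply: clpB; first exact: clpZ.
    by rewrite -[p]negbK; apply: clpM.
  by rewrite iu decomp_eq.
Qed.


Lemma sg_fact1 p b : sg b - sg (~~ p) * sg (p (+) b) = (1 + 1) * sg b.
Proof. by case: p; case: b; rewrite /sgc /=; ring. Qed.

Lemma sg_fact2 p b : sg b - sg (~~ p) * sg (~~ (p (+) b)) = 0.
Proof. by case: p; case: b; rewrite /sgc /=; ring. Qed.

Lemma sg_neq0 b : sg b != 0.
Proof. by case: b; rewrite /sgc ?oppr_eq0 oner_eq0. Qed.

Lemma sgK b (X : A) : sg b *: (sg b *: X) = X.
Proof. by rewrite scalerA; case: b; rewrite /sgc ?mulrNN mul1r scale1r. Qed.

Lemma lin_comb (P X Y : A) (a t c d : C) :
  P * ((a - t * c) *: X + (a - t * d) *: Y) =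
  a *: (P * (X + Y)) - t *: (P * (c *: X + d *: Y)).
Proof.
rewrite !mulrDr -!scalerAr !scalerBl !scalerDr !scalerA opprD.
by rewrite addrACA.
Qed.

Section Frame.
Variable (e : nat -> cseq R) (n : nat).
Hypothesis he : forall j, (j < n)%N -> inV (e j) /\ qf (e j) = 1.
Hypothesis horth : forall i j, (i < n)%N -> (j < n)%N -> i != j -> bf (e i) (e j) = 0.

Definition Ep k := \prod_(i < k) iota (e i).
Definition W k (w : cseq R) := inV w /\ (forall i, (i < k)%N -> bf (e i) w = 0).

Lemma Ep0 : Ep 0 = 1.
Proof. by rewrite /Ep big_ord0. Qed.

Lemma EpS k : Ep k.+1 = Ep k * iota (e k).
Proof. by rewrite /Ep big_ord_recr. Qed.

Lemma eE j : (j < n)%N -> iota (e j) * iota (e j) = 1.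
Proof. by move=> hj; have [? ?] := he hj; exact: sq1. Qed.

Lemma eanti i j : (i < n)%N -> (j < n)%N -> i != j ->
  iota (e i) * iota (e j) = - (iota (e j) * iota (e i)).
Proof.
move=> hi hj hij; have [? _] := he hi; have [? _] := he hj.
by apply: anti0 => //; exact: horth.
Qed.

Lemma Ep_inj k y : (k <= n)%N -> Ep k * y = 0 -> y = 0.
Proof.
elim: k y => [|k IH] y hk; first by rewrite Ep0 mul1r.
rewrite EpS -mulrA => /(IH _ (ltnW hk)) h.
by rewrite -[y]mul1r -(eE hk) -mulrA h mulr0.
Qed.

Lemma L1 k w : (forall i, (i < k)%N -> iota w * iota (e i) = - (iota (e i) * iota w)) ->
  iota w * Ep k = sg (odd k) *: (Ep k * iota w).
Proof.
elim: k => [|k IH] h; first by rewrite Ep0 mulr1 mul1r scale1r.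
have IH' := IH (fun i hi => h i (ltnW hi)).
have -> : iota w * Ep k.+1 = (iota w * Ep k) * iota (e k) by rewrite EpS mulrA.
rewrite IH' -scalerAl.
have -> : Ep k * iota w * iota (e k) = - (Ep k.+1 * iota w).
  by rewrite -mulrA h // mulrN EpS -!mulrA.
rewrite scalerN -scaleNr; congr (_ *: _).
by rewrite /=; case: (odd k); rewrite /sgc ?opprK.
Qed.

Lemma L2 k j : (k <= n)%N -> (j < k)%N ->
  iota (e j) * Ep k = sg (~~ odd k) *: (Ep k * iota (e j)).
Proof.
elim: k => [|k IH] hk hj //.
have hk' := ltnW hk.
have -> : iota (e j) * Ep k.+1 = (iota (e j) * Ep k) * iota (e k) by rewrite EpS mulrA.
case: (ltngtP j k) => hjk.
- rewrite (IH hk' hjk) -scalerAl.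
  have -> : Ep k * iota (e j) * iota (e k) = - (Ep k.+1 * iota (e j)).
    rewrite -mulrA eanti // ?(ltn_trans hjk) ?(ltn_eqF hjk) //.
    by rewrite mulrN EpS -!mulrA.
  rewrite scalerN -scaleNr; congr (_ *: _).
  by rewrite /=; case: (odd k); rewrite /sgc ?opprK.
- by move: hj; rewrite ltnS leqNgt hjk.
- subst j; rewrite L1; last first.
    move=> i hi; rewrite eanti // ?(ltn_trans hi) // gtn_eqF //.
  by rewrite -scalerAl EpS /= negbK.
Qed.

Lemma W_step k w : W k w /\ bf (e k) w = 0 -> W k.+1 w.
Proof.
move=> [[Vw hw] bw]; split => // i; rewrite ltnS leq_eqVlt => /orP [/eqP -> //|].
exact: hw.
Qed.

Lemma W_cl k : (k <= n)%N -> forall c u w, W k u -> W k w -> W k (sadd (sscale c u) w).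
Proof.
move=> hk c u w [Vu hu] [Vw hw]; split; first exact: inV_lin.
move=> i hi; have [Vi _] := he (leq_trans hi hk).
by rewrite bf_lin // hu // hw // mulr0 addr0.
Qed.

Lemma W_V k w : W k w -> inV w.
Proof. by case. Qed.

Lemma W_ek k : (k < n)%N -> W k (e k).
Proof.
move=> hk; have [Vk _] := he hk; split => // i hi.
by apply: horth; rewrite ?(ltn_trans hi) // ltn_eqF.
Qed.

Lemma claim k : (k <= n)%N -> forall p s x, clp (W 0) p x ->
  (forall j, (j < k)%N -> iota (e j) * x = sg s *: (x * iota (e j))) ->
  (s = p -> clp (W k) p x) /\
  (s <> p -> exists y, clp (W k) (p (+) odd k) y /\ x = Ep k * y).
Proof.
elim: k => [|k IH] hk p s x hx hc.
  split => _ //; exists x; split; [by rewrite addbF | by rewrite Ep0 mul1r].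
have hk' : (k <= n)%N := ltnW hk.
have [IH1 IH2] := IH hk' p s x hx (fun j hj => hc j (ltnW hj)).
have [Vk qk] := he hk.
set E := iota (e k).
have hEE : E * E = 1 := sq1 Vk qk.
have hck := hc k (ltnSn k).
have hlet : forall w, (W k w /\ bf (e k) w = 0) -> E * iota w = - (iota w * E).
  by move=> w [[Vw _] bw]; exact: anti0.
split => hsp.
- have hxk := IH1 hsp.
  have [z [y [hz [hy hxe]]]] := decomp (W_cl hk') (@W_V k) (W_ek hk) qk hxk.
  suff y0 : y = 0.
    by rewrite hxe y0 mulr0 addr0; exact: (clp_mono (@W_step k) hz).
  have hz' := clp_anti hlet hz.
  have hy' := clp_anti hlet hy.
  have hEyE : E * y * E = sg (~~ p) *: y.
    by rewrite hy' -scalerAl -mulrA hEE mulr1.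
  move: hck; rewrite hxe hsp mulrDr mulrDl mulrA hEE mul1r hz' scalerDr hEyE scalerA.
  move=> /addrI h.
  apply: two_scale_inj; rewrite addr0.
  have e1 : sg p * sg (~~ p) = -1 by case: (p); rewrite /sgc ?mulrN ?mulNr ?mulr1 ?opprK.
  by rewrite {1}h e1 scaleN1r addNr.
- have [y [hy hxy]] := IH2 hsp.
  have [z [w [hz [hw hye]]]] := decomp (W_cl hk') (@W_V k) (W_ek hk) qk hy.
  set q := p (+) odd k in hz hw hy.
  have hz' := clp_anti hlet hz.
  have hw' := clp_anti hlet hw.
  have hEwE : E * w * E = sg (~~ q) *: w.
    by rewrite hw' -scalerAl -mulrA hEE mulr1.
  have hzE : z * E = sg q *: (E * z) by rewrite hz' sgK.
  have hEEp : E * Ep k = sg (odd k) *: (Ep k * E).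
    apply: L1 => i hi; apply: eanti => //; [exact: ltn_trans hi hk | by rewrite gtn_eqF].
  have hL : E * x = sg (odd k) *: (Ep k * (E * z + w)).
    rewrite hxy hye mulrA hEEp -scalerAl -mulrA mulrDr mulrA hEE mul1r //.
  have hR : x * E = Ep k * (sg q *: (E * z) + sg (~~ q) *: w).
    by rewrite hxy hye -mulrA mulrDl hzE hEwE.
  have ss : s = ~~ p by move: hsp; case: (s); case: (p).
  have key : Ep k * ((sg (odd k) - sg s * sg q) *: (E * z) +
                     (sg (odd k) - sg s * sg (~~ q)) *: w) = 0.
    by rewrite lin_comb -hR -hL hck subrr.
  move: key; rewrite ss /q sg_fact1 sg_fact2 scale0r addr0 => /(Ep_inj hk').
  move/eqP; rewrite scaler_eq0 mulf_eq0 (negbTE (two_neq0 R)) (negbTE (sg_neq0 _)) /=.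
  move=> /eqP Ez.
  have z0 : z = 0 by rewrite -[z]mul1r -hEE -mulrA Ez mulr0.
  exists w; split.
    have -> : p (+) odd k.+1 = ~~ q by rewrite /q /=; case: (p); case: (odd k).
    exact: (clp_mono (@W_step k) hw).
  rewrite hxy hye z0 add0r EpS mulrA //.
Qed.

Lemma Wn_anti j w : (j < n)%N -> W n w ->
  iota (e j) * iota w = - (iota w * iota (e j)).
Proof.
move=> hj [Vw hw]; have [Vj _] := he hj; apply: anti0 => //; exact: hw.
Qed.

Lemma main_gen : odd n ->
  (forall a : A, exists a0 a1 : A, clp (@inV R) false a0 /\ clp (@inV R) true a1 /\ a = a0 + a1) ->
  (exists h : A -> A, alg_morph h /\ forall u, inV u -> h (iota u) = - iota u) ->
  forall a : A, (forall j, (j < n)%N -> iota (e j) * a = a * iota (e j)) <->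
    exists x y : A, clp (W n) false x /\ clp (W n) false y /\ a = Ep n * x + y.
Proof.
move=> hn gen [h [hmor hh]] a; split.
- move=> hc.
  have [a0 [a1 [h0 [h1 ea]]]] := gen a.
  have g0 := clp_gamma hmor hh h0.
  have g1 := clp_gamma hmor hh h1.
  case: (hmor) => hD hM h1' hZ.
  have hha : h a = a0 - a1 by rewrite ea hD g0 g1 /sgc scale1r scaleN1r.
  have hc' : forall j, (j < n)%N -> iota (e j) * (a0 - a1) = (a0 - a1) * iota (e j).
    move=> j hj; have [Vj _] := he hj.
    have := congr1 h (hc j hj); rewrite !hM hh // hha mulNr mulrN.
    by move=> /oppr_inj.
  have c0 : forall j, (j < n)%N -> iota (e j) * a0 = sg false *: (a0 * iota (e j)).
    move=> j hj; rewrite scale1r; apply: two_scale_inj.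
    have := hc j hj; rewrite ea mulrDr mulrDl => e1.
    have := hc' j hj; rewrite mulrBr mulrBl => e2.
    by rewrite -(zs1 _ (iota (e j) * a1)) e1 e2 zs1.
  have c1 : forall j, (j < n)%N -> iota (e j) * a1 = sg false *: (a1 * iota (e j)).
    move=> j hj; rewrite scale1r; apply: two_scale_inj.
    have := hc j hj; rewrite ea mulrDr mulrDl => e1.
    have := hc' j hj; rewrite mulrBr mulrBl => e2.
    by rewrite -(zs2 (iota (e j) * a0)) e1 e2 zs2.
  have W0 : forall w, inV w -> W 0 w by move=> w Vw; split.
  have [cl0 _] := claim (leqnn n) (clp_mono W0 h0) c0.
  have [_ cl1] := claim (leqnn n) (clp_mono W0 h1) c1.
  have [y [hy ey]] := cl1 (fun H => ltac:(discriminate H)).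
  exists y, a0; split; first by move: hy; rewrite hn.
  split; first exact: cl0.
  by rewrite ea ey addrC.
- move=> [x [y [hx [hy ->]]]] j hj.
  have hlet := fun w => @Wn_anti j w hj.
  have ex := clp_anti hlet hx; have ey := clp_anti hlet hy.
  rewrite /sgc scale1r in ex; rewrite /sgc scale1r in ey.
  rewrite mulrDr mulrDl ey mulrA L2 // hn /sgc scale1r -!mulrA ex //.
Qed.

End Frame.

End Core.


Section Conv.
Variable R : realType.
Variable A : algType (complex R).
Variable iota : cseq R -> A.

Lemma word_clp U (s : seq (cseq R)) :
  List.Forall U s -> clp iota U (odd (size s)) (\prod_(x <- s) iota x).
Proof.
elim: s => [|u s IH] hF; first by rewrite big_nil; exact: clp1.
rewrite big_cons /=; apply: clpM.
- exact: (List.Forall_inv hF).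
- exact: IH (List.Forall_inv_tail hF).
Qed.

Lemma cl_to_clp U x : cl_even iota U x -> clp iota U false x.
Proof.
move=> [k [c [w [hw ->]]]].
elim/big_ind: _.
- exact: clp0.
- by move=> a b ha hb; exact: clpD.
- move=> i _; apply: clpZ; have [hF hp] := hw i.
  by move: (word_clp hF); rewrite (negbTE hp).
Qed.

Lemma clp_to_cl U p x : clp iota U p x ->
  exists (k : nat) (c : 'I_k -> complex R) (w : 'I_k -> seq (cseq R)),
    (forall i, List.Forall U (w i) /\ odd (size (w i)) = p) /\
    x = \sum_(i < k) c i *: \prod_(x <- w i) iota x.
Proof.
elim => {p x}.
- exists 1%N, (fun _ => 1), (fun _ => [::]); split.
    by move=> i; split => //; exact: List.Forall_nil.
  by rewrite big_ord1 big_nil scale1r.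
- move=> p; exists 0%N, (fun _ => 0), (fun _ => [::]); split; first by case.
  by rewrite big_ord0.
- move=> p x y _ [k1 [c1 [w1 [hw1 ->]]]] _ [k2 [c2 [w2 [hw2 ->]]]].
  exists (k1 + k2)%N,
    (fun i => match fintype.split i with inl a => c1 a | inr b => c2 b end),
    (fun i => match fintype.split i with inl a => w1 a | inr b => w2 b end).
  split.
    by move=> i; case: (fintype.split i).
  rewrite big_split_ord /=; congr (_ + _); apply: eq_bigr => i _.
  + by rewrite (unsplitK (inl i) : fintype.split (lshift k2 i) = inl i).
  + by rewrite (unsplitK (inr i) : fintype.split (rshift k1 i) = inr i).
- move=> p a x _ [k [c [w [hw ->]]]].
  exists k, (fun i => a * c i), w; split => //.
  by rewrite scaler_sumr; apply: eq_bigr => i _; rewrite scalerA.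
- move=> p u x hu _ [k [c [w [hw ->]]]].
  exists k, c, (fun i => u :: w i); split.
    move=> i; have [hF hp] := hw i; split; first exact: List.Forall_cons.
    by rewrite /= hp.
  rewrite mulr_sumr; apply: eq_bigr => i _; by rewrite -scalerAr big_cons.
Qed.

Lemma clp_cl U x : clp iota U false x -> cl_even iota U x.
Proof.
move=> /clp_to_cl [k [c [w [hw ->]]]]; exists k, c, w; split => //.
by move=> i; have [hF hp] := hw i; rewrite hp.
Qed.

End Conv.

Section Gen.
Variable R : realType.
Variable A : algType (complex R).
Variable iota : cseq R -> A.
Hypothesis hcl : is_clifford iota.

Definition genP (a : A) : Prop :=
  exists a0 a1 : A, clp iota (@inV R) false a0 /\ clp iota (@inV R) true a1 /\ a = a0 + a1.

Definition genB : {pred A} := fun a => `[< genP a >].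

Lemma zs3 (V : zmodType) (a b c d : V) : (a + b) + (c + d) = (a + d) + (b + c).
Proof. by rewrite [c + d]addrC addrACA. Qed.

Lemma genB_closed : GRing.subsemialg_closed genB.
Proof.
split.
- apply/asboolP; exists 1, 0; split; first exact: clp1.
  by split; [exact: clp0 | rewrite addr0].
- split.
    apply/asboolP; exists 0, 0; split; first exact: clp0.
    by split; [exact: clp0 | rewrite addr0].
  move=> x y /asboolP [x0 [x1 [hx0 [hx1 ->]]]] /asboolP [y0 [y1 [hy0 [hy1 ->]]]].
  apply/asboolP; exists (x0 + y0), (x1 + y1); split; first exact: clpD.
  by split; [exact: clpD | rewrite addrACA].
- move=> c x /asboolP [x0 [x1 [hx0 [hx1 ->]]]].
  apply/asboolP; exists (c *: x0), (c *: x1); split; first exact: clpZ.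
  by split; [exact: clpZ | rewrite scalerDr].
- move=> x y /asboolP [x0 [x1 [hx0 [hx1 ->]]]] /asboolP [y0 [y1 [hy0 [hy1 ->]]]].
  apply/asboolP; exists (x0 * y0 + x1 * y1), (x0 * y1 + x1 * y0); split.
    by apply: clpD; [exact: (clp_mul hx0 hy0) | exact: (clp_mul hx1 hy1)].
  split.
    by apply: clpD; [exact: (clp_mul hx0 hy1) | exact: (clp_mul hx1 hy0)].
  by rewrite mulrDl !mulrDr zs3.
Qed.

Let hP := genB_closed.
Definition SA := {x : A | x \in genB}.
HB.instance Definition _ := [isSub of SA for @sval A (fun x => x \in genB)].
HB.instance Definition _ := [Choice of SA by <:].
HB.instance Definition _ := GRing.SubChoice_isSubAlgebra.Build _ A genB SA hP.

Lemma generation (a : A) : genP a.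
Proof.
have [[hlin hsq] huniv] := hcl.
have iota_in : forall u, inV u -> iota u \in genB.
  move=> u Vu; apply/asboolP; exists 0, (iota u * 1); split; first exact: clp0.
  have h1 : clp iota (@inV R) false 1 by exact: clp1.
  split; first exact: (clpM Vu h1).
  by rewrite mulr1 add0r.
pose g : cseq R -> SA := fun u => insubd (0 : SA) (iota u).
have gval : forall u, inV u -> val (g u) = iota u.
  by move=> u Vu; rewrite /g insubdK //; exact: iota_in.
have gdata : clifford_data g.
  split.
    move=> c u v Vu Vv; apply: val_inj.
    rewrite gval; last exact: inV_lin.
    by rewrite hlin // -(gval _ Vu) -(gval _ Vv).
  move=> v Vv; apply: val_inj.
  by rewrite [LHS]/= gval // hsq.
have [[h [[hD hM h1 hZ] hh]] _] := huniv SA g gdata.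
have vmor : alg_morph (fun x => val (h x)).
  split.
  - by move=> x y; rewrite hD.
  - by move=> x y; rewrite hM.
  - by rewrite h1.
  - by move=> c x; rewrite hZ.
have idmor : alg_morph (fun x : A => x) by [].
have [_ uniq] := huniv A iota (conj hlin hsq).
have := uniq (fun x => val (h x)) (fun x => x) vmor idmor
   (fun v Vv => etrans (congr1 val (hh v Vv)) (gval _ Vv)) (fun v Vv => erefl).
move=> /(_ a) <-.
by have := valP (h a) => /asboolP.
Qed.

Lemma gamma_exists :
  exists h : A -> A, alg_morph h /\ forall u, inV u -> h (iota u) = - iota u.
Proof.
have [[hlin hsq] huniv] := hcl.
have data : clifford_data (fun u => - iota u).
  split.
    by move=> c u v Vu Vv; rewrite hlin // opprD scalerN.
  by move=> v Vv; rewrite mulrNN hsq.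
have [[h [hmor hh]] _] := huniv A _ data.
by exists h.
Qed.

End Gen.


End Aux.
Import Aux.

Theorem lemma4 (R : realType) (A : algType (complex R)) (iota : cseq R -> A) :
  is_clifford iota ->
  (* (A) *)
  (forall v : cseq R, inV v -> qf v = 1 ->
     forall a : A, centr iota v a <->
       exists x y, cl_even iota (perp v) x /\ cl_even iota (perp v) y /\
                   a = iota v * x + y) /\
  (* (B) *)
  (forall n : nat, odd n ->
     let U := fun w => forall i : 'I_n, perp (unitv R i.+1) w in
     forall a : A, (forall i : 'I_n, centr iota (unitv R i.+1) a) <->
       exists x y, cl_even iota U x /\ cl_even iota U y /\
                   a = (\prod_(i < n) iota (unitv R i.+1)) * x + y).
Proof.
move=> hcl; have [[hlin hsq] _] := hcl.
have gen := generation hcl.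
have gam := gamma_exists hcl.
split.
- move=> v Vv qv a.
  have he : forall j, (j < 1)%N -> inV ((fun _ => v) j) /\ qf ((fun _ => v) j) = 1 by [].
  have horth : forall i j, (i < 1)%N -> (j < 1)%N -> i != j ->
      bf ((fun _ => v) i) ((fun _ => v) j) = 0.
    by case=> [|//] [|//].
  have M := main_gen hlin hsq he horth erefl gen gam a.
  have WP : forall w, W (fun _ => v) 1 w <-> perp v w.
    move=> w; split; first by case=> Vw hw; split => //; exact: hw 0%N _.
    by case=> Vw hw; split => // i _.
  have E1 : Ep iota (fun _ => v) 1 = iota v by rewrite /Ep big_ord1.
  split.
  + move=> hc; have [x [y [hx [hy ea]]]] := (proj1 M) (fun j _ => hc).
    exists x, y; split; first by apply: clp_cl; apply: clp_mono hx => w /WP.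
    split; first by apply: clp_cl; apply: clp_mono hy => w /WP.
    by rewrite ea E1.
  + move=> [x [y [hx [hy ea]]]].
    have ea' : a = Ep iota (fun _ => v) 1 * x + y by rewrite E1.
    have := (proj2 M) (ex_intro _ x (ex_intro _ y (conj
      (clp_mono (fun w => proj2 (WP w)) (cl_to_clp hx)) (conj
      (clp_mono (fun w => proj2 (WP w)) (cl_to_clp hy)) ea')))).
    by move=> /(_ 0%N erefl).
- move=> n hn U a.
  have n0 : (0 < n)%N by move: (n) hn; case.
  pose e := fun i : nat => unitv R i.+1.
  have he : forall j, (j < n)%N -> inV (e j) /\ qf (e j) = 1.
    by move=> j _; split; [exact: inV_unitv | exact: qf_unitv].
  have horth : forall i j, (i < n)%N -> (j < n)%N -> i != j -> bf (e i) (e j) = 0.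
    by move=> i j _ _; exact: bf_unitv.
  have M := main_gen hlin hsq he horth hn gen gam a.
  have WP : forall w, W e n w <-> U w.
    move=> w; split.
      by case=> Vw hw i; split => //; exact: hw _ (ltn_ord i).
    move=> hU; split; first exact: (hU (Ordinal n0)).1.
    by move=> i hi; exact: (hU (Ordinal hi)).2.
  split.
  + move=> hc; have [x [y [hx [hy ea]]]] := (proj1 M) (fun j hj => hc (Ordinal hj)).
    exists x, y; split; first by apply: clp_cl; apply: clp_mono hx => w /WP.
    by split; first by apply: clp_cl; apply: clp_mono hy => w /WP.
  + move=> [x [y [hx [hy ea]]]] i.
    have := (proj2 M) (ex_intro _ x (ex_intro _ y (conj
      (clp_mono (fun w => proj2 (WP w)) (cl_to_clp hx)) (conj
      (clp_mono (fun w => proj2 (WP w)) (cl_to_clp hy)) ea)))).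
    by move=> /(_ i (ltn_ord i)).
Qed.
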